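(* Let $p(C_1),\dots,p(C_K)>0$ be probabilities summing to $1$ and let $\mathcal E=-\sum_{j=1}^K p(C_j)\log p(C_j)$. Let $\{t_1,\dots,t_n\}$ be partitioned into $K$ nonempty clusters $C_1,\dots,C_K$ with sizes $n_j$, $n_{\min}=\min_j n_j$, $\bar p(C_j)=n_j/n$, and let $g^{\mathrm{True}}\in\{0,1\}^{n\times K}$ with $g^{\mathrm{True}}_{ij}=1$ iff $t_i\in C_j$. Let $g\in\{0,1\}^{n\times K}$ have exactly one entry $1$ in each row, $\hat p(C_j)=\frac1n\sum_i g_{ij}$, $\hat{\mathcal E}=-\sum_j \hat p(C_j)\log\hat p(C_j)$ (with $0\log 0=0$), and $M_{\mathrm{error}}=\sum_{j}\sum_{i}\mathbb I(g_{ij}\ne g^{\mathrm{True}}_{ij})$. Suppose there exists $0<c_2<1$ with $2Kn_{\min}/n\ge c_2$. Then $$|\mathcal E-\hat{\mathcal E}|\le \sum_{j=1}^K\left(\left|\frac{p(C_j)-\bar p(C_j)}{p(C_j)}\right|+\log\!\left(\frac{1}{p(C_j)}\right)\left|p(C_j)-\bar p(C_j)\right|\right)+h\!\left(\frac{2K}{c_2}\right)\left|\frac1n M_{\mathrm{error}}\right|,$$ where $h(x)=x+\log x$.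
   Context: $\mathcal E$ is the true entropy of the cluster distribution, $\bar p$ the empirical cluster proportions, and $\hat{\mathcal E}$ the entropy from an estimated clustering whose cluster labels are aligned with the true ones. *)

(* Defs.v *)
From mathcomp Require Import all_boot all_order all_algebra.
From mathcomp Require Import all_classical all_reals all_analysis.
Set Implicit Arguments. Unset Strict Implicit. Unset Printing Implicit Defensive.
Import Order.TTheory GRing.Theory Num.Theory.
Local Open Scope ring_scope.

Definition xlnx {R : realType} (x : R) : R := if x == 0 then 0 else x * ln x.

Definition entropy {R : realType} {K : nat} (q : 'I_K -> R) : R :=
  - \sum_(j < K) xlnx (q j).

Definition csize {n K : nat} (lab : 'I_n -> 'I_K) (j : 'I_K) : nat :=
  #|[set i | lab i == j]|.

(* n_min = min_j n_j (each n_j <= n, so n is a neutral start value) *)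
Definition nmin {n K : nat} (lab : 'I_n -> 'I_K) : nat :=
  \big[minn/n]_(j < K) csize lab j.

Definition pbar {R : realType} {n K : nat} (lab : 'I_n -> 'I_K) (j : 'I_K) : R :=
  (csize lab j)%:R / n%:R.

Definition gtrue {n K : nat} (lab : 'I_n -> 'I_K) (i : 'I_n) (j : 'I_K) : bool :=
  lab i == j.

Definition phat {R : realType} {n K : nat} (g : 'I_n -> 'I_K -> bool) (j : 'I_K) : R :=
  (\sum_(i < n) (g i j : nat)%:R) / n%:R.

Definition Merror {n K : nat} (lab : 'I_n -> 'I_K) (g : 'I_n -> 'I_K -> bool) : nat :=
  \sum_(j < K) \sum_(i < n) (g i j != gtrue lab i j : nat).

Definition hfun {R : realType} (x : R) : R := x + ln x.

(* Main.v *)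
Require Import Defs.
From mathcomp Require Import all_boot all_order all_algebra.
From mathcomp Require Import all_classical all_reals all_analysis.
From mathcomp Require Import ring lra.
Import Order.TTheory GRing.Theory Num.Theory.
Local Open Scope ring_scope.
Lemma ln_le_sub1 (R : realType) (z : R) : 0 < z -> ln z <= z - 1.
Proof. move=> z0. have := @le_ln1Dx R (z - 1). rewrite addrCA subrr addr0. apply. lra. Qed.

Lemma key (R : realType) (x y : R) : 0 < x -> x <= 1 -> 0 <= y -> y <= 1 ->
  `|xlnx x - xlnx y| <= `|x - y| / x + ln (1 / x) * `|x - y|.
Proof.
move=> x0 x1 y0 y1.
rewrite /xlnx gt_eqF // div1r lnV ?posrE //.
have A0 : ln x <= 0 by exact: ln_le0.
have u0 : 0 < x^-1 by rewrite invr_gt0.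
have xu : x * x^-1 = 1 by rewrite divff // gt_eqF.
have [->|yn0] := eqVneq y 0.
  rewrite subr0 subr0 normrM (gtr0_norm x0) (ler0_norm A0).
  have : 0 <= x / x by rewrite xu. nra.
idtac.
have yp : 0 < y by rewrite lt0r yn0.
have h1 : y * ln x - y * ln y <= `|x - y| / x.
  have [yx|xy] := leP y x.
  - have := @ln_le_sub1 _ _ (divr_gt0 x0 yp). rewrite ln_div ?posrE //.
    have yv : y * y^-1 = 1 by rewrite divff // gt_eqF.
    move=> h. have : y * (ln x - ln y) <= y * (x / y - 1) by rewrite ler_pM2l.
    rewrite mulrBr mulrBr mulrCA yv mulr1 mulr1 => h2.
    rewrite ger0_norm ?subr_ge0 //.
    have : (x - y) * 1 <= (x - y) * x^-1.
      apply: ler_wpM2l; first by rewrite subr_ge0.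
      by rewrite -invr1 lef_pV2 ?posrE.
    lra.
  - have : ln x <= ln y by rewrite ler_ln ?posrE // ltW.
    move=> hl. have : 0 <= y * (ln y - ln x) by apply: mulr_ge0; lra.
    rewrite mulrBr.
    have : 0 <= (y - x) * x^-1 by apply: mulr_ge0; lra.
    rewrite ltr0_norm ?subr_lt0 // opprB. lra.
have h2 : y * ln y - y * ln x <= `|x - y| / x.
  have [yx|xy] := leP y x.
  - have : ln y <= ln x by rewrite ler_ln ?posrE.
    have : 0 <= (x - y) * x^-1 by apply: mulr_ge0; lra.
    move=> h0 hl. have : 0 <= y * (ln x - ln y) by apply: mulr_ge0; lra.
    rewrite mulrBr. rewrite ger0_norm ?subr_ge0 //. lra.
  - have := @ln_le_sub1 _ _ (divr_gt0 yp x0). rewrite ln_div ?posrE //.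
    move=> h. have : y * (ln y - ln x) <= y * (y / x - 1) by rewrite ler_pM2l.
    rewrite mulrBr mulrBr mulr1 => h3.
    rewrite ltr0_norm ?subr_lt0 // opprB.
    have : y * (y / x) <= (y - x) / x + y.
      rewrite mulrA. have -> : (y - x) / x + y = (y - x) / x + y * (x / x) by rewrite xu mulr1.
      rewrite mulrA -mulrDl. apply: ler_wpM2r; first exact: ltW. nra.
    lra.
have e : x * ln x - y * ln y = (x - y) * ln x + (y * ln x - y * ln y) by ring.
rewrite e. apply: (le_trans (ler_normD _ _)).
have hn : `|y * ln x - y * ln y| <= `|x - y| / x by rewrite ler_norml; apply/andP; split; lra.
rewrite normrM (ler0_norm A0). rewrite [-ln x * _]mulrC. lra.
Qed.

Lemma csizeE (R : realType) n K (lab : 'I_n -> 'I_K) j :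
  (csize lab j)%:R = \sum_(i < n) ((lab i == j) : nat)%:R :> R.
Proof.
rewrite /csize -sum1_card natr_sum big_mkcond /=; apply: eq_bigr => i _.
by rewrite inE; case: (lab i == j).
Qed.

Lemma diff_bool (R : realType) (a b : bool) :
  `|(a : nat)%:R - (b : nat)%:R| = ((a != b) : nat)%:R :> R.
Proof. by case: a; case: b; rewrite /= ?subrr ?normr0 ?subr0 ?sub0r ?normrN ?normr1. Qed.

Lemma bigminn_le (I : eqType) (r : seq I) x (F : I -> nat) j :
  j \in r -> (\big[minn/x]_(i <- r) F i <= F j)%N.
Proof.
elim: r => // a r IH; rewrite in_cons big_cons => /orP [/eqP->|jr].
  exact: geq_minl.
exact: leq_trans (geq_minr _ _) (IH jr).
Qed.

Theorem lemma4 (R : realType) (K n : nat) (p : 'I_K -> R)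
  (lab : 'I_n -> 'I_K) (g : 'I_n -> 'I_K -> bool) (c2 : R) :
  (forall j, 0 < p j) ->
  \sum_(j < K) p j = 1 ->
  (forall j, exists i, lab i = j) ->
  (forall i, #|[set j | g i j]| = 1%N) ->
  0 < c2 -> c2 < 1 ->
  c2 <= (2 * K)%:R * (nmin lab)%:R / n%:R ->
  `| entropy p - entropy (phat g) | <=
    \sum_(j < K) (`| (p j - pbar lab j) / p j |
                  + ln (1 / p j) * `| p j - pbar lab j |)
    + hfun ((2 * K)%:R / c2) * `| (Merror lab g)%:R / n%:R |.
Proof.
move=> p0 psum _ _ c0 c1 hc.
have K0 : (0 < K)%N.
  case: (posnP K) => // K0; move: psum; rewrite big1 => [/eqP|i _].
    by rewrite eq_sym oner_eq0.
  by have := ltn_ord i; rewrite {2}K0.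
have n0 : (0 < n)%N.
  case: (posnP n) => // n00; move: hc; have -> : n%:R = 0 :> R by rewrite n00.
  rewrite invr0 mulr0 => hc; lra.
have nR : 0 < n%:R :> R by rewrite ltr0n.
have KR : 0 < (2 * K)%:R :> R by rewrite ltr0n muln_gt0.
set a := c2 / (2 * K)%:R.
have a0 : 0 < a by rewrite divr_gt0.
have p1 : forall j, p j <= 1.
  move=> j; rewrite -psum (bigD1 j) //= lerDl sumr_ge0 // => i _; exact: ltW.
have qa : forall j, a <= pbar lab j.
  move=> j; rewrite /pbar /a ler_pdivrMr // mulrC mulrA ler_pdivlMr //.
  rewrite -ler_pdivlMr //. apply: (le_trans hc).
  rewrite ler_pM2r ?invr_gt0 // ler_pM2l //.
  rewrite ler_nat /nmin. apply: bigminn_le. exact: mem_index_enum.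
have q1 : forall j, pbar lab j <= 1 :> R.
  move=> j; rewrite /pbar ler_pdivrMr // mul1r ler_nat.
  by have := max_card (mem [set i | lab i == j]); rewrite card_ord.
have q0 : forall j, 0 < pbar lab j :> R by move=> j; exact: lt_le_trans (qa j).
have r0 : forall j, 0 <= phat g j :> R.
  move=> j; rewrite /phat divr_ge0 // sumr_ge0 // => i _; exact: ler0n.
have r1 : forall j, phat g j <= 1 :> R.
  move=> j; rewrite /phat ler_pdivrMr // mul1r.
  have -> : n%:R = \sum_(i < n) (1 : R) by rewrite sumr_const card_ord.
  apply: ler_sum => i _.
  by case: (g i j).
set H := hfun ((2 * K)%:R / c2).
have Ha : H = a^-1 + ln (1 / a) by rewrite /H /hfun /a div1r !invf_div.
have aK : 1 <= a^-1.
  rewrite /a invf_div ler_pdivlMr // mul1r. apply: (le_trans (ltW c1)).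
  by rewrite ler1n muln_gt0.
have H0 : 0 <= H by rewrite Ha div1r; have := ln_ge0 aK; lra.
have part2 : forall j, `|xlnx (pbar lab j) - xlnx (phat g j)| <=
    H * ((\sum_(i < n) ((g i j != gtrue lab i j) : nat)%:R) / n%:R).
  move=> j.
  apply: (le_trans (@key _ _ _ (q0 j) (q1 j) (r0 j) (r1 j))).
  have hd : `|pbar (R:=R) lab j - phat g j| <=
      (\sum_(i < n) ((g i j != gtrue lab i j) : nat)%:R) / n%:R.
    rewrite /pbar /phat csizeE -mulrBl normrM (gtr0_norm (x := n%:R^-1)) ?invr_gt0 // ler_pM2r ?invr_gt0 //.
    rewrite -sumrB; apply: (le_trans (ler_norm_sum _ _ _)); apply: ler_sum => i _.
    by rewrite diff_bool /gtrue eq_sym.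
  have ia : (pbar (R:=R) lab j)^-1 <= a^-1 by rewrite lef_pV2 ?posrE.
  have il : ln (1 / pbar (R:=R) lab j) <= ln (1 / a).
    by rewrite !div1r ler_ln ?posrE ?invr_gt0.
  have n1 : 0 <= `|pbar (R:=R) lab j - phat g j| by [].
  have il0 : 0 <= ln (1 / pbar (R:=R) lab j) by rewrite div1r lnV ?posrE // oppr_ge0 ln_le0.
  apply: (@le_trans _ _ (`|pbar (R:=R) lab j - phat g j| * H)).
    rewrite Ha mulrDr [ln _ * _]mulrC. apply: lerD; first exact: ler_wpM2l.
    exact: ler_wpM2l.
  rewrite mulrC; exact: ler_wpM2l.
have part1 : forall j, `|xlnx (p j) - xlnx (pbar lab j)| <=
    `| (p j - pbar lab j) / p j | + ln (1 / p j) * `| p j - pbar lab j |.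
  move=> j; rewrite normrM (gtr0_norm (x := (p j)^-1)) ?invr_gt0 //.
  exact: @key _ _ _ (p0 j) (p1 j) (ltW (q0 j)) (q1 j).
have -> : entropy p - entropy (phat g) =
    - \sum_j ((xlnx (p j) - xlnx (pbar (R:=R) lab j)) + (xlnx (pbar (R:=R) lab j) - xlnx (phat g j))).
  rewrite /entropy big_split /= !sumrB; ring.
rewrite normrN.
apply: (le_trans (ler_norm_sum _ _ _)).
have hM : `|(Merror lab g)%:R / n%:R| =
    \sum_j ((\sum_(i < n) ((g i j != gtrue lab i j) : nat)%:R) / n%:R) :> R.
  rewrite ger0_norm ?divr_ge0 // -mulr_suml /Merror natr_sum; congr (_ / _); apply: eq_bigr => j _.
  by rewrite natr_sum.
rewrite hM mulr_sumr -big_split /=; apply: ler_sum => j _.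
apply: (le_trans (ler_normD _ _)); exact: lerD.
Qed.
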